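(* Let $P_{XY}$ be a probability distribution on $\mathcal X\times\mathcal Y$ and $P'_{X'Y'}$ one on $\mathcal X'\times\mathcal Y'$ (finite sets), and let $(X,X')$ and $(Y,Y')$ be jointly distributed according to $P_{XY}\times P'_{X'Y'}$. Then $U(XX';YY')=U(X;Y)+U(X';Y')$.
   Context: $D(P\|Q)=\sum P\log(P/Q)$ ($0\log(0/q)=0$; $+\infty$ if $P\not\ll Q$). For a joint distribution $P_{AB}$ with $A$-marginal $P_A$, $U(A;B)=\min_{Q_B}D(P_A\times Q_B\|P_{AB})$; here $U(XX';YY')$ means this quantity with $A=(X,X')$, $B=(Y,Y')$. *)

(* Defs.v *)
From HB Require Import structures.
From mathcomp Require Import all_boot all_order all_algebra.
From mathcomp Require Import all_classical all_reals.
From mathcomp Require Import ereal exp.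
Set Implicit Arguments. Unset Strict Implicit. Unset Printing Implicit Defensive.
Import Order.TTheory GRing.Theory Num.Theory.
Local Open Scope classical_set_scope.
Local Open Scope ring_scope.

Definition is_dist (R : realType) (T : finType) (p : T -> R) : Prop :=
  (forall t, 0 <= p t) /\ \sum_(t : T) p t = 1.

Definition KL (R : realType) (T : finType) (P Q : T -> R) : \bar R :=
  if [exists t, (P t != 0) && (Q t == 0)] then +oo%E
  else (\sum_(t : T) (if P t == 0 then 0 else P t * ln (P t / Q t)))%:E.

Definition margA (R : realType) (A B : finType) (P : A * B -> R) : A -> R :=
  fun a => \sum_(b : B) P (a, b).

Definition prodD (R : realType) (A B : finType) (PA : A -> R) (QB : B -> R) : A * B -> R :=
  fun ab => PA ab.1 * QB ab.2.

(* U(A;B) = min over Q_B of D(P_A x Q_B || P_AB) (written as an infimum over the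
   probability simplex on B; the infimum is attained). *)
Definition Ufun (R : realType) (A B : finType) (P : A * B -> R) : \bar R :=
  ereal_inf [set KL (prodD (margA P) Q) P | Q in [set Q : B -> R | is_dist Q]].

Definition pairJoint (R : realType) (X Y X' Y' : finType)
  (P : X * Y -> R) (P' : X' * Y' -> R) : (X * X') * (Y * Y') -> R :=
  fun z => P (z.1.1, z.2.1) * P' (z.1.2, z.2.2).

(* Main.v *)
Require Import Defs.
From HB Require Import structures.
From mathcomp Require Import all_boot all_order all_algebra.
From mathcomp Require Import all_classical all_reals.
From mathcomp Require Import ereal exp.
From mathcomp Require Import ring lra.
Set Implicit Arguments. Unset Strict Implicit. Unset Printing Implicit Defensive.
Import Order.TTheory GRing.Theory Num.Theory.
Local Open Scope ring_scope.

Section Aux.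
Variable R : realType.

Lemma KL_fin (T : finType) (f g : T -> R) :
  ~~ [exists t, (f t != 0) && (g t == 0)] ->
  KL f g = (\sum_t f t * ln (f t / g t))%:E.
Proof.
move=> H; rewrite /KL (negbTE H); congr (_%:E); apply: eq_bigr => t _.
by case: eqP => [->|]; rewrite ?mul0r.
Qed.

Lemma KL_cases (T : finType) (f g : T -> R) :
  KL f g = +oo%E \/ KL f g \is a fin_num.
Proof. by rewrite /KL; case: ifP; auto. Qed.

Lemma noex (T : finType) (f g : T -> R) :
  ~~ [exists t, (f t != 0) && (g t == 0)] -> forall t, f t != 0 -> g t != 0.
Proof. by move=> /existsPn H t ft; move: (H t); rewrite ft. Qed.

Lemma ln_le_sub1 (z : R) : 0 < z -> ln z <= z - 1.
Proof.
move=> z0; have h := @le_ln1Dx R (z - 1).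
have e : 1 + (z - 1) = z by ring.
by rewrite e in h; apply: h; lra.
Qed.

Lemma gibbs_pt (a b : R) : 0 <= a -> 0 <= b -> (a != 0 -> b != 0) ->
  a - b <= a * ln (a / b).
Proof.
move=> a0 b0 ab; have [->|an0] := eqVneq a 0; first by rewrite mul0r; lra.
have bn0 := ab an0.
have ap : 0 < a by rewrite lt0r an0.
have bp : 0 < b by rewrite lt0r bn0.
have h := ln_le_sub1 (divr_gt0 bp ap).
rewrite -[a / b]invf_div lnV ?posrE ?divr_gt0 //.
have := ler_wpM2l (ltW ap) h.
rewrite mulrBr mulr1 mulrCA divff ?mulr1 // mulrN.
lra.
Qed.

Lemma gibbs (T : finType) (f g : T -> R) : (forall t, 0 <= f t) ->
  (forall t, 0 <= g t) -> (forall t, f t != 0 -> g t != 0) ->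
  \sum_t g t <= \sum_t f t -> 0 <= \sum_t f t * ln (f t / g t).
Proof.
move=> f0 g0 fg H; apply: (@le_trans _ _ (\sum_t (f t - g t))).
  by rewrite sumrB subr_ge0.
by apply: ler_sum => t _; apply: gibbs_pt; [exact: f0|exact: g0|exact: fg].
Qed.

Lemma KL_ge0 (T : finType) (f g : T -> R) : (forall t, 0 <= f t) ->
  (forall t, 0 <= g t) -> \sum_t g t <= \sum_t f t -> (0 <= KL f g)%E.
Proof.
move=> f0 g0 s; case: (boolP [exists t, (f t != 0) && (g t == 0)]) => H.
  by rewrite /KL H.
by rewrite KL_fin // lee_fin; apply: gibbs => //; apply: noex.
Qed.

Lemma sum_pair (I J : finType) (F : I * J -> R) :
  \sum_p F p = \sum_i \sum_j F (i, j).
Proof. by rewrite pair_bigA; apply: eq_bigr => -[]. Qed.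

Lemma margA_ge0 (A B : finType) (P : A * B -> R) : (forall t, 0 <= P t) ->
  forall a, 0 <= margA P a.
Proof. by move=> P0 a; apply: sumr_ge0. Qed.

Lemma margA_sum (A B : finType) (P : A * B -> R) :
  \sum_a margA P a = \sum_t P t.
Proof. by rewrite sum_pair. Qed.

Definition margB (A B : finType) (P : A * B -> R) : B -> R :=
  fun b => \sum_(a : A) P (a, b).

Lemma margB_sum (A B : finType) (P : A * B -> R) :
  \sum_b margB P b = \sum_t P t.
Proof. by rewrite sum_pair exchange_big. Qed.

Lemma dist_margA (A B : finType) (P : A * B -> R) : is_dist P -> is_dist (margA P).
Proof. by case=> P0 P1; split; [apply: margA_ge0|rewrite margA_sum]. Qed.

Lemma dist_margB (A B : finType) (P : A * B -> R) : is_dist P -> is_dist (margB P).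
Proof.
by case=> P0 P1; split; [move=> b; apply: sumr_ge0|rewrite margB_sum].
Qed.

Lemma prodD_sum (A B : finType) (f : A -> R) (g : B -> R) :
  \sum_t prodD f g t = (\sum_a f a) * (\sum_b g b).
Proof. by rewrite sum_pair big_distrlr. Qed.

Lemma prodD_ge0 (A B : finType) (f : A -> R) (g : B -> R) :
  (forall a, 0 <= f a) -> (forall b, 0 <= g b) -> forall t, 0 <= prodD f g t.
Proof. by move=> f0 g0 t; apply: mulr_ge0. Qed.

Lemma term_le_sum (I : finType) (F : I -> R) i : (forall j, 0 <= F j) ->
  F i <= \sum_j F j.
Proof.
by move=> F0; rewrite (bigD1 i) //= lerDl; apply: sumr_ge0.
Qed.

End Aux.
Section Main.
Variables (R : realType) (X Y X' Y' : finType).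
Variables (P : X * Y -> R) (P' : X' * Y' -> R).

Lemma margA_pair x x' :
  margA (pairJoint P P') (x, x') = margA P x * margA P' x'.
Proof. by rewrite /margA /pairJoint big_distrlr pair_bigA. Qed.

Lemma sumXY (F : (X * X') * (Y * Y') -> R) :
  \sum_t F t = \sum_(u : X * Y) \sum_(v : X' * Y') F ((u.1, v.1), (u.2, v.2)).
Proof.
rewrite sum_pair sum_pair [RHS]sum_pair; apply: eq_bigr => x _.
rewrite [RHS]exchange_big [RHS]sum_pair; apply: eq_bigr => x' _.
by rewrite sum_pair exchange_big.
Qed.

Lemma split2 (a b a' b' : R) : 0 <= a -> 0 <= a' -> 0 <= b -> 0 <= b' ->
  (a != 0 -> b != 0) -> (a' != 0 -> b' != 0) ->
  (a * a') * ln ((a * a') / (b * b')) = a * ln (a / b) * a' + a * (a' * ln (a' / b')).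
Proof.
move=> a0 a'0 b0 b'0 ab ab'.
have [->|an0] := eqVneq a 0; first by rewrite !mul0r add0r.
have [->|an0'] := eqVneq a' 0; first by rewrite !(mulr0, mul0r) addr0.
have bp : 0 < b by rewrite lt0r ab.
have bp' : 0 < b' by rewrite lt0r ab'.
have ap : 0 < a by rewrite lt0r an0.
have ap' : 0 < a' by rewrite lt0r an0'.
rewrite invfM mulrACA [ln (_ / _ * _)]lnM ?posrE ?divr_gt0 //; ring.
Qed.

Lemma le_part (Q : Y -> R) (Q' : Y' -> R) : is_dist P -> is_dist P' ->
  is_dist Q -> is_dist Q' ->
  (KL (prodD (margA (pairJoint P P')) (fun z => Q z.1 * Q' z.2)%R) (pairJoint P P')
    <= KL (prodD (margA P) Q) P + KL (prodD (margA P') Q') P')%E.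
Proof.
move=> [P0 P1] [P'0 P'1] [Q0 Q1] [Q'0 Q'1].
case: (boolP [exists t, (prodD (margA P) Q t != 0) && (P t == 0)]) => E1.
  rewrite {2}/KL E1 addye ?leey //.
  by case: (KL_cases (prodD (margA P') Q') P') => [->|/fin_numP[]].
case: (boolP [exists t, (prodD (margA P') Q' t != 0) && (P' t == 0)]) => E2.
  rewrite {3}/KL E2 addey ?leey //.
  by case: (KL_cases (prodD (margA P) Q) P) => [->|/fin_numP[]].
have E3 : ~~ [exists t, (prodD (margA (pairJoint P P')) (fun z => Q z.1 * Q' z.2) t != 0)
                 && (pairJoint P P' t == 0)].
  apply/existsPn => -[[x x'] [y y']]; rewrite /prodD /= margA_pair /pairJoint /=.
  move: E1 E2 => /existsPn/(_ (x, y)) + /existsPn/(_ (x', y')).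
  rewrite /prodD /= !mulf_eq0.
  by do ![case: (_ == 0)].
rewrite (KL_fin E1) (KL_fin E2) (KL_fin E3) -EFinD lee_fin le_eqVlt; apply/orP; left.
apply/eqP.
have n1 := noex E1; have n2 := noex E2.
have M0 := margA_ge0 P0; have M'0 := margA_ge0 P'0.
transitivity (\sum_(u : X * Y) \sum_(v : X' * Y')
   (prodD (margA P) Q u * ln (prodD (margA P) Q u / P u) * prodD (margA P') Q' v
    + prodD (margA P) Q u * (prodD (margA P') Q' v * ln (prodD (margA P') Q' v / P' v)))).
  rewrite sumXY; apply: eq_bigr => -[x y] _; apply: eq_bigr => -[x' y'] _ /=.
  rewrite {1 2}/prodD /= margA_pair /pairJoint /= mulrACA.
  apply: split2; rewrite ?mulr_ge0 //; [exact: (n1 (x, y))|exact: (n2 (x', y'))].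
under eq_bigr do rewrite big_split /=.
rewrite big_split /=.
rewrite -big_distrlr -big_distrlr /=.
rewrite !prodD_sum !margA_sum P1 P'1 Q1 Q'1 !mulr1 mul1r.
done.
Qed.


Lemma eqle (x y : R) : x = y -> x <= y.
Proof. by move->. Qed.

Lemma split3 (m m' q q1 q2 r r' : R) : 0 <= m -> 0 <= m' -> 0 <= q ->
  0 <= r -> 0 <= r' -> q <= q1 -> q <= q2 ->
  (m * m' * q != 0 -> r * r' != 0) ->
  m * m' * q * ln (m * m' * q / (r * r')) =
  m * m' * q * ln (m * q1 / r) + m * m' * q * ln (m' * q2 / r')
  + m * m' * q * ln (q / (q1 * q2)).
Proof.
move=> m0 m'0 q0 r0 r'0 qq1 qq2 h.
have [e|nz] := eqVneq (m * m' * q) 0; first by rewrite e !mul0r !addr0.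
have rr := h nz; move: nz rr.
rewrite !mulf_eq0 !negb_or => /andP[/andP[mn m'n] qn] /andP[rn r'n].
have mp : 0 < m by rewrite lt0r mn.
have m'p : 0 < m' by rewrite lt0r m'n.
have qp : 0 < q by rewrite lt0r qn.
have rp : 0 < r by rewrite lt0r rn.
have r'p : 0 < r' by rewrite lt0r r'n.
have q1p : 0 < q1 by apply: lt_le_trans qq1.
have q2p : 0 < q2 by apply: lt_le_trans qq2.
have q1n : q1 != 0 by rewrite lt0r_neq0.
have q2n : q2 != 0 by rewrite lt0r_neq0.
rewrite -!mulrDr; congr (_ * _).
have -> : m * m' * q / (r * r') = (m * q1 / r) * (m' * q2 / r') * (q / (q1 * q2)).
  by field; rewrite q1n q2n rn r'n.
set A := m * q1 / r; set B := m' * q2 / r'; set C := q / (q1 * q2).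
have Ap : 0 < A by rewrite /A divr_gt0 // mulr_gt0.
have Bp : 0 < B by rewrite /B divr_gt0 // mulr_gt0.
have Cp : 0 < C by rewrite /C divr_gt0 // mulr_gt0.
have h1 := @lnM R (A * B) C; have h2 := @lnM R A B.
have pAB : A * B \in Num.pos by rewrite posrE mulr_gt0.
by rewrite (h1 pAB) ?posrE // h2 ?posrE.
Qed.

Lemma ge_part (Q : Y * Y' -> R) : is_dist P -> is_dist P' -> is_dist Q ->
  (KL (prodD (margA P) (margA Q)) P + KL (prodD (margA P') (margB Q)) P'
    <= KL (prodD (margA (pairJoint P P')) Q) (pairJoint P P'))%E.
Proof.
move=> [P0 P1] [P'0 P'1] [Q0 Q1].
have M0 := margA_ge0 P0; have M'0 := margA_ge0 P'0.
have MS : \sum_x margA P x = 1 by rewrite margA_sum.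
have M'S : \sum_x margA P' x = 1 by rewrite margA_sum.
case: (boolP [exists t, (prodD (margA (pairJoint P P')) Q t != 0)
                 && (pairJoint P P' t == 0)]) => E3.
  by rewrite {3}/KL E3 leey.
have n3 := noex E3.
have ex_pos (I : finType) (F : I -> R) : (forall i, 0 <= F i) ->
    \sum_i F i != 0 -> exists i, 0 < F i.
  move=> F0 /eqP /(psumr_neq0P (fun i _ => F0 i)) [i /andP[_ h]]; by exists i.
have E1 : ~~ [exists t, (prodD (margA P) (margA Q) t != 0) && (P t == 0)].
  apply/existsPn => -[x y]; apply/negP.
  rewrite /prodD /= mulf_eq0 negb_or => /andP[/andP[mx qy] /eqP pz].
  have [y' qp] := ex_pos _ (fun y' => Q (y, y')) (fun y' => Q0 (y, y')) qy.
  have [x' mp] : exists x', 0 < margA P' x' by apply: (ex_pos _ _ M'0); rewrite M'S oner_eq0.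
  have := n3 ((x, x'), (y, y')); rewrite /prodD /= margA_pair /pairJoint /= pz mul0r eqxx /=.
  move=> H; suff : false by []; apply: H.
  by rewrite !mulf_neq0 // lt0r_neq0.
have E2 : ~~ [exists t, (prodD (margA P') (margB Q) t != 0) && (P' t == 0)].
  apply/existsPn => -[x' y']; apply/negP.
  rewrite /prodD /= mulf_eq0 negb_or => /andP[/andP[mx qy] /eqP pz].
  have [y qp] := ex_pos _ (fun y => Q (y, y')) (fun y => Q0 (y, y')) qy.
  have [x mp] : exists x, 0 < margA P x by apply: (ex_pos _ _ M0); rewrite MS oner_eq0.
  have := n3 ((x, x'), (y, y')); rewrite /prodD /= margA_pair /pairJoint /= pz mulr0 eqxx /=.
  move=> H; suff : false by []; apply: H.
  by rewrite !mulf_neq0 // lt0r_neq0.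
rewrite (KL_fin E1) (KL_fin E2) (KL_fin E3) -EFinD lee_fin.
have le1 y y' : Q (y, y') <= margA Q y :=
  @term_le_sum R _ (fun j => Q (y, j)) y' (fun j => Q0 (y, j)).
have le2 y y' : Q (y, y') <= margB Q y' :=
  @term_le_sum R _ (fun j => Q (j, y')) y (fun j => Q0 (j, y')).
pose a (t : (X * X') * (Y * Y')) := margA P t.1.1 * margA P' t.1.2 * Q t.2.
apply: (@le_trans _ _ (\sum_t (a t * ln (margA P t.1.1 * margA Q t.2.1 / P (t.1.1, t.2.1))
   + a t * ln (margA P' t.1.2 * margB Q t.2.2 / P' (t.1.2, t.2.2))
   + a t * ln (Q t.2 / (margA Q t.2.1 * margB Q t.2.2))))); last first.
  apply: eqle; apply: eq_bigr => -[[x x'] [y y']] _; rewrite /a /= /prodD /=.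
  rewrite margA_pair /pairJoint /=; symmetry; apply: split3 => //.
  by have := n3 ((x, x'), (y, y')); rewrite /prodD /= margA_pair /pairJoint /=.
rewrite big_split big_split /=.
have -> : \sum_t a t * ln (margA P t.1.1 * margA Q t.2.1 / P (t.1.1, t.2.1))
   = \sum_u prodD (margA P) (margA Q) u * ln (prodD (margA P) (margA Q) u / P u).
  rewrite sumXY; apply: eq_bigr => -[x y] _.
  transitivity (margA P x * ln (margA P x * margA Q y / P (x, y)) *
     \sum_(v : X' * Y') (margA P' v.1 * Q (y, v.2))).
    by rewrite mulr_sumr; apply: eq_bigr => v _; rewrite /a /=; ring.
  rewrite (prodD_sum (margA P') (fun j => Q (y, j))) M'S mul1r.
  change (\sum_j Q (y, j)) with (margA Q y).
  change (prodD (margA P) (margA Q) (x, y)) with (margA P x * margA Q y).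
  ring.
have -> : \sum_t a t * ln (margA P' t.1.2 * margB Q t.2.2 / P' (t.1.2, t.2.2))
   = \sum_u prodD (margA P') (margB Q) u * ln (prodD (margA P') (margB Q) u / P' u).
  rewrite sumXY exchange_big; apply: eq_bigr => -[x' y'] _.
  transitivity (margA P' x' * ln (margA P' x' * margB Q y' / P' (x', y')) *
     \sum_(u : X * Y) (margA P u.1 * Q (u.2, y'))).
    by rewrite mulr_sumr; apply: eq_bigr => u _; rewrite /a /=; ring.
  rewrite (prodD_sum (margA P) (fun j => Q (j, y'))) MS mul1r.
  change (\sum_j Q (j, y')) with (margB Q y').
  change (prodD (margA P') (margB Q) (x', y')) with (margA P' x' * margB Q y').
  ring.
rewrite lerDl.
rewrite sum_pair.
apply: (@le_trans _ _ (\sum_(i : X * X') \sum_(j : Y * Y') (margA P i.1 * margA P' i.2) *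
   (Q j * ln (Q j / (margA Q j.1 * margB Q j.2))))); last first.
  by apply: eqle; apply: eq_bigr => i _; apply: eq_bigr => j _; rewrite /a /=; ring.
rewrite -big_distrlr /=; apply: mulr_ge0.
  by apply: sumr_ge0 => i _; apply: mulr_ge0.
have G := @gibbs R _ Q (prodD (margA Q) (margB Q)) Q0.
rewrite /prodD in G; apply: G.
- by move=> t; apply: mulr_ge0; apply: sumr_ge0 => i _.
- move=> [y y'] /= qn; have qp : 0 < Q (y, y') by rewrite lt0r qn Q0.
  apply: mulf_neq0; apply: lt0r_neq0; apply: lt_le_trans qp _; [exact: le1|exact: le2].
- have := prodD_sum (margA Q) (margB Q); rewrite /prodD => ->.
  by rewrite margA_sum margB_sum Q1 mulr1.
Qed.

End Main.

Theorem mainTheorem9 (R : realType) (X Y X' Y' : finType)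
  (P : X * Y -> R) (P' : X' * Y' -> R) :
  is_dist P -> is_dist P' ->
  Ufun (pairJoint P P') = (Ufun P + Ufun P')%E.
Proof.
move=> HP HP'.
have U0 (A B : finType) (S : A * B -> R) : is_dist S -> (0 <= Ufun S)%E.
  move=> [S0 S1]; rewrite /Ufun; apply/ereal_infP => _ [Q HQ <-].
  case: HQ => Q0 Q1.
  apply: KL_ge0; [exact: prodD_ge0 (margA_ge0 S0) Q0 | exact: S0 |].
  by rewrite prodD_sum margA_sum S1 Q1 mulr1.
apply/eqP; rewrite eq_le; apply/andP; split; last first.
  rewrite [X in (_ <= X)%E]/Ufun; apply/ereal_infP => _ [Q HQ <-].
  apply: le_trans (ge_part HP HP' HQ).
  apply: leeD; apply: ereal_inf_lbound.
    by exists (margA Q) => //; apply: dist_margA.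
  by exists (margB Q) => //; apply: dist_margB.
have step (Q' : Y' -> R) : is_dist Q' ->
    (Ufun (pairJoint P P') <= Ufun P + KL (prodD (margA P') Q') P')%E.
  move=> HQ'.
  case: (KL_cases (prodD (margA P') Q') P') => [->|kf].
    rewrite addey ?leey //; move: (U0 _ _ _ HP); by case: (Ufun P).
  rewrite -leeBlDr // [X in (_ <= X)%E]/Ufun; apply/ereal_infP => _ [Q HQ <-].
  rewrite leeBlDr //.
  apply: le_trans (le_part HP HP' HQ HQ').
  apply: ereal_inf_lbound; exists (fun z => Q z.1 * Q' z.2)%R => //.
  case: HQ => Q0 Q1; case: HQ' => Q'0 Q'1; split.
    by move=> t; apply: mulr_ge0.
  by have := prodD_sum Q Q'; rewrite /prodD => ->; rewrite Q1 Q'1 mulr1.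
move: (U0 _ _ _ HP) step; case: (Ufun P) => [u| |] // _ step.
  rewrite -leeBlDl // [X in (_ <= X)%E]/Ufun; apply/ereal_infP => _ [Q' HQ' <-].
  by rewrite leeBlDl //; apply: step.
rewrite addye ?leey //; move: (U0 _ _ _ HP'); by case: (Ufun P').
Qed.
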